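(* Let $(X,T)$ be a topological dynamical system such that $(X,T^j)$ is uniquely ergodic for every $j\ge1$, let $k\ge1$, and let $f\in C(X)$. Suppose that for every $\alpha\in\mathbb{R}$ and every $x\in X$, $$\lim_{N\to\infty}\sup_{P\in\mathbb{R}_{k-1}[t]}\left|\frac1N\sum_{n=0}^{N-1}e^{2\pi i(n^k\alpha+P(n))}f(T^nx)\right|=0.$$ Then for every $x\in X$, $$\lim_{N\to\infty}\sup_{P\in\mathbb{R}_{k}[t]}\left|\frac1N\sum_{n=0}^{N-1}e^{2\pi iP(n)}f(T^nx)\right|=0.$$
   Context: A topological dynamical system is a compact metric space $X$ with a continuous map $T:X\to X$. $\mathbb{R}_j[t]$ denotes real polynomials of degree at most $j$ ($\mathbb{R}_0[t]$ = real constants). *)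

(* Defs.v *)
From Stdlib Require Export Reals.
Open Scope R_scope.

Definition is_metric {X : Type} (d : X -> X -> R) : Prop :=
  (forall x y, 0 <= d x y) /\
  (forall x y, d x y = 0 <-> x = y) /\
  (forall x y, d x y = d y x) /\
  (forall x y z, d x z <= d x y + d y z).

Definition seq_converges {X : Type} (d : X -> X -> R) (u : nat -> X) (l : X) : Prop :=
  forall eps, eps > 0 -> exists N, forall n, (n >= N)%nat -> d (u n) l < eps.

(* Compactness of a metric space (= sequential compactness for metric spaces). *)
Definition metric_compact {X : Type} (d : X -> X -> R) : Prop :=
  forall u : nat -> X, exists (phi : nat -> nat) (l : X),
    (forall n, (phi n < phi (S n))%nat) /\ seq_converges d (fun n => u (phi n)) l.

Definition continuous_map {X : Type} (d : X -> X -> R) (T : X -> X) : Prop :=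
  forall x eps, eps > 0 -> exists delta, delta > 0 /\
    forall y, d x y < delta -> d (T x) (T y) < eps.

Definition continuous_fun {X : Type} (d : X -> X -> R) (f : X -> R) : Prop :=
  forall x eps, eps > 0 -> exists delta, delta > 0 /\
    forall y, d x y < delta -> Rabs (f x - f y) < eps.

Definition tds {X : Type} (d : X -> X -> R) (T : X -> X) : Prop :=
  is_metric d /\ metric_compact d /\ continuous_map d T.

Fixpoint iter_map {X : Type} (n : nat) (T : X -> X) (x : X) : X :=
  match n with O => x | S m => T (iter_map m T x) end.

(* ---------- Invariant measures via Riesz representation ----------
   A Borel probability measure on a compact metric space X is the same as a
   positive linear functional L on C(X) with L(1) = 1.  L is given as a
   function on all of X -> R, but only its values on continuous functions
   are constrained / compared. *)
Definition invariant_state {X : Type} (d : X -> X -> R) (T : X -> X)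
    (L : (X -> R) -> R) : Prop :=
  (forall f g a b, continuous_fun d f -> continuous_fun d g ->
     L (fun x => a * f x + b * g x) = a * L f + b * L g) /\
  (forall f, continuous_fun d f -> (forall x, 0 <= f x) -> 0 <= L f) /\
  L (fun _ => 1) = 1 /\
  (forall f, continuous_fun d f -> L (fun x => f (T x)) = L f).

Definition uniquely_ergodic {X : Type} (d : X -> X -> R) (T : X -> X) : Prop :=
  (exists L, invariant_state d T L) /\
  (forall L1 L2, invariant_state d T L1 -> invariant_state d T L2 ->
     forall f, continuous_fun d f -> L1 f = L2 f).

(* P(t) = sum_{j < m} c j * t^j, i.e. an element of R_{m-1}[t]. *)
Fixpoint poly_eval (c : nat -> R) (m : nat) (t : R) : R :=
  match m with O => 0 | S j => poly_eval c j t + c j * t ^ j end.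

(* Real and imaginary parts of sum_{n<N} e^{2 pi i theta(n)} (fr + i fi)(T^n x) *)
Fixpoint expsum_re {X : Type} (theta : nat -> R) (fr fi : X -> R) (T : X -> X)
    (x : X) (N : nat) : R :=
  match N with
  | O => 0
  | S n => expsum_re theta fr fi T x n
           + (cos (2 * PI * theta n) * fr (iter_map n T x)
              - sin (2 * PI * theta n) * fi (iter_map n T x))
  end.

Fixpoint expsum_im {X : Type} (theta : nat -> R) (fr fi : X -> R) (T : X -> X)
    (x : X) (N : nat) : R :=
  match N with
  | O => 0
  | S n => expsum_im theta fr fi T x n
           + (sin (2 * PI * theta n) * fr (iter_map n T x)
              + cos (2 * PI * theta n) * fi (iter_map n T x))
  end.

Definition avg_abs {X : Type} (theta : nat -> R) (fr fi : X -> R) (T : X -> X)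
    (x : X) (N : nat) : R :=
  sqrt (expsum_re theta fr fi T x N ^ 2 + expsum_im theta fr fi T x N ^ 2) / INR N.

(* Main.v *)
Require Import Defs.
From Stdlib Require Import Reals Lra Lia ClassicalEpsilon FunctionalExtensionality Classical ZArith List.
From mathcomp Require ssreflect boolp classical_sets filter.
Open Scope R_scope.

Fixpoint sumR (a : nat -> R) (N : nat) : R :=
  match N with O => 0 | S n => sumR a n + a n end.

Lemma sumR_ext a b N : (forall n, (n < N)%nat -> a n = b n) -> sumR a N = sumR b N.
Proof. induction N; simpl; intros H; auto. rewrite IHN by (intros; apply H; lia). rewrite H by lia; auto. Qed.

Lemma sumR_plus a b N : sumR (fun n => a n + b n) N = sumR a N + sumR b N.
Proof. induction N; simpl; [lra| rewrite IHN; lra]. Qed.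

Lemma sumR_minus a b N : sumR (fun n => a n - b n) N = sumR a N - sumR b N.
Proof. induction N; simpl; [lra| rewrite IHN; lra]. Qed.

Lemma sumR_scal r a N : sumR (fun n => r * a n) N = r * sumR a N.
Proof. induction N; simpl; [lra| rewrite IHN; lra]. Qed.

Lemma sumR_const c N : sumR (fun _ => c) N = INR N * c.
Proof. induction N; simpl sumR; [simpl; lra| rewrite IHN, S_INR; lra]. Qed.

Lemma sumR_le a b N : (forall n, (n < N)%nat -> a n <= b n) -> sumR a N <= sumR b N.
Proof. induction N; simpl; intros H; [lra|]. assert (a N <= b N) by (apply H; lia).
 assert (sumR a N <= sumR b N) by (apply IHN; intros; apply H; lia). lra. Qed.

Lemma sumR_swap (F : nat -> nat -> R) N M :
  sumR (fun m => sumR (fun h => F m h) M) N = sumR (fun h => sumR (fun m => F m h) N) M.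
Proof.
  induction N; simpl.
  - induction M; simpl; [auto| rewrite <- IHM; lra].
  - rewrite IHN. rewrite <- sumR_plus. auto.
Qed.

Lemma sumR_split a h N : sumR a (h + N) = sumR a h + sumR (fun n => a (h + n)%nat) N.
Proof. induction N; simpl. rewrite Nat.add_0_r; lra. rewrite Nat.add_succ_r; simpl; rewrite IHN; lra. Qed.

Lemma sumR_succ a N : sumR (fun m => a (S m)) N = sumR a N + a N - a O.
Proof. induction N; simpl; [lra| rewrite IHN; lra]. Qed.

Lemma sumR_abs a N : Rabs (sumR a N) <= sumR (fun n => Rabs (a n)) N.
Proof. induction N; simpl. rewrite Rabs_R0; lra.
  eapply Rle_trans; [apply Rabs_triang|lra]. Qed.

Lemma block_identity a N M :
  INR M * sumR a N = sumR (fun m => sumR (fun h => a (m + h)%nat) M) N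
     - sumR (fun h => sumR (fun n => a (N + n)%nat - a n) h) M.
Proof.
  rewrite sumR_swap.
  assert (E : forall h, sumR (fun m => a (m + h)%nat) N = sumR a N + sumR (fun n => a (N + n)%nat - a n) h).
  { intro h. rewrite sumR_minus.
    assert (E1 := sumR_split a h N). assert (E2 := sumR_split a N h).
    rewrite Nat.add_comm in E1.
    rewrite (sumR_ext (fun m => a (m + h)%nat) (fun n => a (h + n)%nat)) by (intros; f_equal; lia).
    lra. }
  rewrite (sumR_ext (fun h => sumR (fun m => a (m + h)%nat) N) (fun h => sumR a N + sumR (fun n => a (N + n)%nat - a n) h) M) by (intros; apply E).
  rewrite sumR_plus, sumR_const. match goal with |- _ = _ + ?B - ?C => replace C with B by reflexivity end; ring.
Qed.

Definition nrm (a b : R) := sqrt (a ^ 2 + b ^ 2).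

Lemma nrm_ge0 a b : 0 <= nrm a b.
Proof. apply sqrt_pos. Qed.

Lemma nrm_sq a b : nrm a b * nrm a b = a ^ 2 + b ^ 2.
Proof. unfold nrm; apply sqrt_sqrt; nra. Qed.

Lemma nrm_le_iff a b r : 0 <= r -> a ^ 2 + b ^ 2 <= r * r -> nrm a b <= r.
Proof. intros Hr H. unfold nrm. rewrite <- (sqrt_square r) by auto. apply sqrt_le_1; nra. Qed.

Lemma nrm_triangle a b a' b' : nrm (a + a') (b + b') <= nrm a b + nrm a' b'.
Proof.
  apply nrm_le_iff. pose proof (nrm_ge0 a b); pose proof (nrm_ge0 a' b'); lra.
  pose proof (nrm_sq a b); pose proof (nrm_sq a' b'); pose proof (nrm_ge0 a b); pose proof (nrm_ge0 a' b').
  assert (a * a' + b * b' <= nrm a b * nrm a' b').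
  { destruct (Rle_dec (a * a' + b * b') 0); [nra|].
    apply Rsqr_incr_0_var. unfold Rsqr. 
    replace (nrm a b * nrm a' b' * (nrm a b * nrm a' b')) with ((nrm a b * nrm a b) * (nrm a' b' * nrm a' b')) by ring.
    rewrite nrm_sq, nrm_sq. assert (0 <= (a * b' - a' * b) ^ 2) by apply pow2_ge_0.
    replace ((a * a' + b * b') * (a * a' + b * b')) with ((a ^ 2 + b ^ 2) * (a' ^ 2 + b' ^ 2) - (a * b' - a' * b) ^ 2) by ring. lra.
    apply Rmult_le_pos; auto. }
  nra.
Qed.

Lemma nrm_abs a b : nrm a b <= Rabs a + Rabs b.
Proof. apply nrm_le_iff. pose proof (Rabs_pos a); pose proof (Rabs_pos b); lra.
  pose proof (Rabs_pos a); pose proof (Rabs_pos b).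
  replace (a ^ 2) with (Rabs a * Rabs a) by (rewrite <- Rabs_mult; simpl; rewrite Rmult_1_r; apply Rabs_right; nra).
  replace (b ^ 2) with (Rabs b * Rabs b) by (rewrite <- Rabs_mult; simpl; rewrite Rmult_1_r; apply Rabs_right; nra).
  nra. Qed.

Lemma nrm_rot u v a b : nrm (u * a - v * b) (v * a + u * b) = nrm u v * nrm a b.
Proof. unfold nrm. rewrite <- sqrt_mult by nra. f_equal. ring. Qed.

Lemma nrm_scal r a b : nrm (r * a) (r * b) = Rabs r * nrm a b.
Proof. unfold nrm. rewrite <- sqrt_Rsqr_abs, <- sqrt_mult by (unfold Rsqr; nra). f_equal. unfold Rsqr; ring. Qed.

Lemma nrm_opp a b : nrm (- a) (- b) = nrm a b.
Proof. unfold nrm; f_equal; ring. Qed.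

Lemma nrm_minus_le a b a' b' : nrm a b - nrm a' b' <= nrm (a - a') (b - b').
Proof. pose proof (nrm_triangle (a - a') (b - b') a' b'). replace (a - a' + a') with a in H by ring.
  replace (b - b' + b') with b in H by ring. lra. Qed.

Lemma nrm_diff_abs a b a' b' : Rabs (nrm a b - nrm a' b') <= nrm (a - a') (b - b').
Proof. apply Rabs_le; split.
  - pose proof (nrm_minus_le a' b' a b). rewrite <- (nrm_opp (a' - a) (b' - b)) in H.
    replace (- (a' - a)) with (a - a') in H by ring. replace (- (b' - b)) with (b - b') in H by ring. lra.
  - apply nrm_minus_le. Qed.

Lemma nrm_sum a b N : nrm (sumR a N) (sumR b N) <= sumR (fun n => nrm (a n) (b n)) N.
Proof. induction N; simpl. unfold nrm; replace (0 ^ 2 + 0 ^ 2) with 0 by ring; rewrite sqrt_0; lra.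
  eapply Rle_trans; [apply nrm_triangle|lra]. Qed.

Lemma nrm_cos_sin t : nrm (cos t) (sin t) = 1.
Proof. unfold nrm. replace (cos t ^ 2 + sin t ^ 2) with 1. apply sqrt_1.
  pose proof (sin2_cos2 t). unfold Rsqr in H. simpl. lra. Qed.

Lemma abs_sin_le x : Rabs (sin x) <= Rabs x.
Proof.
  assert (forall y, 0 <= y -> Rabs (sin y) <= y).
  { intros y Hy. destruct (Req_dec y 0). subst; rewrite sin_0, Rabs_R0; lra.
    pose proof (sin_lt_x y). destruct (Rle_dec 1 y).
    - pose proof (SIN_bound y). apply Rabs_le; lra.
    - assert (0 <= sin y). apply sin_ge_0; try lra. pose proof PI2_1; lra.
      rewrite Rabs_right; lra. }
  destruct (Rle_dec 0 x). rewrite (Rabs_right x) by lra; auto.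
  rewrite (Rabs_left x) by lra. rewrite <- (Ropp_involutive x) at 1. rewrite sin_neg, Rabs_Ropp. apply H; lra.
Qed.

Lemma nrm_exp_diff A B : nrm (cos A - cos B) (sin A - sin B) <= Rabs (A - B).
Proof.
  apply nrm_le_iff. apply Rabs_pos.
  assert (E : (cos A - cos B) ^ 2 + (sin A - sin B) ^ 2 = 2 - 2 * cos (A - B)).
  { rewrite cos_minus. pose proof (sin2_cos2 A); pose proof (sin2_cos2 B). unfold Rsqr in *. simpl. nra. }
  rewrite E. replace (A - B) with (2 * ((A - B) / 2)) at 1 by field. rewrite cos_2a_sin.
  pose proof (abs_sin_le ((A - B) / 2)).
  assert (Rabs (sin ((A - B) / 2)) * Rabs (sin ((A - B) / 2)) <= Rabs ((A - B) / 2) * Rabs ((A - B) / 2)).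
  { apply Rmult_le_compat; auto; apply Rabs_pos. }
  rewrite <- !Rabs_mult in H0. rewrite !Rabs_pos_eq in H0 by apply Rle_0_sqr.
  rewrite <- Rabs_mult, Rabs_pos_eq by apply Rle_0_sqr.
  replace ((A - B) * (A - B)) with (4 * ((A - B) / 2 * ((A - B) / 2))) by field. lra.
Qed.
Open Scope R_scope.

Definition re_t {X : Type} (th : nat -> R) (fr fi : X -> R) (T : X -> X) (y : X) (n : nat) : R :=
  cos (2 * PI * th n) * fr (iter_map n T y) - sin (2 * PI * th n) * fi (iter_map n T y).
Definition im_t {X : Type} (th : nat -> R) (fr fi : X -> R) (T : X -> X) (y : X) (n : nat) : R :=
  sin (2 * PI * th n) * fr (iter_map n T y) + cos (2 * PI * th n) * fi (iter_map n T y).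

Lemma expsum_re_eq {X} th (fr fi : X -> R) T y N : expsum_re th fr fi T y N = sumR (re_t th fr fi T y) N.
Proof. induction N; simpl; auto. rewrite IHN; reflexivity. Qed.
Lemma expsum_im_eq {X} th (fr fi : X -> R) T y N : expsum_im th fr fi T y N = sumR (im_t th fr fi T y) N.
Proof. induction N; simpl; auto. rewrite IHN; reflexivity. Qed.

Lemma avg_abs_eq {X} th (fr fi : X -> R) T y N :
  avg_abs th fr fi T y N = nrm (sumR (re_t th fr fi T y) N) (sumR (im_t th fr fi T y) N) / INR N.
Proof. unfold avg_abs. rewrite expsum_re_eq, expsum_im_eq. reflexivity. Qed.

Lemma term_nrm {X} th (fr fi : X -> R) T y n :
  nrm (re_t th fr fi T y n) (im_t th fr fi T y n) = nrm (fr (iter_map n T y)) (fi (iter_map n T y)).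
Proof. unfold re_t, im_t. rewrite nrm_rot, nrm_cos_sin. ring. Qed.

Lemma S_diff {X} th1 th2 (fr fi : X -> R) T y M C :
  (forall z, nrm (fr z) (fi z) <= C) ->
  nrm (sumR (re_t th1 fr fi T y) M) (sumR (im_t th1 fr fi T y) M) <=
  nrm (sumR (re_t th2 fr fi T y) M) (sumR (im_t th2 fr fi T y) M)
  + sumR (fun h => Rabs (2 * PI * th1 h - 2 * PI * th2 h) * C) M.
Proof.
  intros HC.
  assert (E1 : sumR (re_t th1 fr fi T y) M = sumR (re_t th2 fr fi T y) M
     + sumR (fun n => re_t th1 fr fi T y n - re_t th2 fr fi T y n) M) by (rewrite sumR_minus; ring).
  assert (E2 : sumR (im_t th1 fr fi T y) M = sumR (im_t th2 fr fi T y) M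
     + sumR (fun n => im_t th1 fr fi T y n - im_t th2 fr fi T y n) M) by (rewrite sumR_minus; ring).
  rewrite E1, E2. eapply Rle_trans; [apply nrm_triangle|]. apply Rplus_le_compat_l.
  eapply Rle_trans; [apply nrm_sum|]. apply sumR_le. intros n _.
  unfold re_t, im_t.
  set (A := 2 * PI * th1 n). set (B := 2 * PI * th2 n).
  set (F := fr (iter_map n T y)). set (G := fi (iter_map n T y)).
  replace (cos A * F - sin A * G - (cos B * F - sin B * G)) with ((cos A - cos B) * F - (sin A - sin B) * G) by ring.
  replace (sin A * F + cos A * G - (sin B * F + cos B * G)) with ((sin A - sin B) * F + (cos A - cos B) * G) by ring.
  rewrite nrm_rot. apply Rmult_le_compat; [apply nrm_ge0|apply nrm_ge0|apply nrm_exp_diff|apply HC].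
Qed.

Lemma cos_int t z : cos (2 * PI * (t + IZR z)) = cos (2 * PI * t) /\ sin (2 * PI * (t + IZR z)) = sin (2 * PI * t).
Proof.
  destruct (Z_le_gt_dec 0 z) as [Hz|Hz].
  - destruct (Z_of_nat_complete z Hz) as [n ->]. rewrite <- INR_IZR_INZ.
    replace (2 * PI * (t + INR n)) with (2 * PI * t + 2 * INR n * PI) by ring.
    rewrite cos_period, sin_period; auto.
  - assert (0 <= - z)%Z by lia. destruct (Z_of_nat_complete _ H) as [n Hn].
    replace z with (- Z.of_nat n)%Z by lia. rewrite opp_IZR, <- INR_IZR_INZ.
    set (u := 2 * PI * (t + - INR n)).
    replace (2 * PI * t) with (u + 2 * INR n * PI) by (unfold u; ring).
    rewrite cos_period, sin_period; auto.
Qed.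

Lemma S_per {X} th1 th2 (fr fi : X -> R) T y M :
  (forall n, exists z, th1 n = th2 n + IZR z) ->
  sumR (re_t th1 fr fi T y) M = sumR (re_t th2 fr fi T y) M /\
  sumR (im_t th1 fr fi T y) M = sumR (im_t th2 fr fi T y) M.
Proof.
  intros H. split; apply sumR_ext; intros n _; destruct (H n) as [z Hz]; unfold re_t, im_t;
  rewrite Hz; destruct (cos_int (th2 n) z) as [-> ->]; reflexivity.
Qed.

Definition is_poly (K : nat) (phi : R -> R) := exists c, forall t, phi t = poly_eval c K t.

Lemma poly_eval_ext c c' K t : (forall j, (j < K)%nat -> c j = c' j) -> poly_eval c K t = poly_eval c' K t.
Proof. induction K; simpl; intros H; auto. rewrite IHK by (intros; apply H; lia). rewrite H by lia; auto. Qed.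

Lemma is_poly_ext K phi psi : (forall t, phi t = psi t) -> is_poly K phi -> is_poly K psi.
Proof. intros E [c Hc]; exists c; intros t; rewrite <- E; auto. Qed.

Lemma is_poly_zero K : is_poly K (fun _ => 0).
Proof. exists (fun _ => 0). intros t; induction K; simpl; [auto| rewrite <- IHK; ring]. Qed.

Lemma is_poly_plus K phi psi : is_poly K phi -> is_poly K psi -> is_poly K (fun t => phi t + psi t).
Proof. intros [c Hc] [e He]; exists (fun j => c j + e j); intros t; rewrite Hc, He.
  clear; induction K; simpl; [ring| rewrite <- IHK; ring]. Qed.

Lemma is_poly_scal K r phi : is_poly K phi -> is_poly K (fun t => r * phi t).
Proof. intros [c Hc]; exists (fun j => r * c j); intros t; rewrite Hc.
  clear; induction K; simpl; [ring| rewrite <- IHK; ring]. Qed.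

Lemma is_poly_lift K phi : is_poly K phi -> is_poly (S K) phi.
Proof. intros [c Hc]; exists (fun j => if (j <? K)%nat then c j else 0); intros t; rewrite Hc.
  simpl. rewrite Nat.ltb_irrefl. rewrite (poly_eval_ext c (fun j => if (j <? K)%nat then c j else 0)).
  ring. intros j Hj. apply Nat.ltb_lt in Hj. rewrite Hj; auto. Qed.

Lemma is_poly_mulX K phi : is_poly K phi -> is_poly (S K) (fun t => t * phi t).
Proof. intros [c Hc]; exists (fun j => match j with O => 0 | S j' => c j' end); intros t; rewrite Hc.
  clear; induction K; simpl; [ring|]. simpl in IHK. rewrite <- IHK. ring. Qed.

Lemma is_poly_mono K r : is_poly (S K) (fun t => r * t ^ K).
Proof. exists (fun j => if (j =? K)%nat then r else 0); intros t. simpl. rewrite Nat.eqb_refl.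
  rewrite (poly_eval_ext _ (fun _ => 0)). 
  assert (poly_eval (fun _ => 0) K t = 0) by (clear; induction K; simpl; [auto| rewrite IHK; ring]). lra.
  intros j Hj. destruct (Nat.eqb_spec j K); [lia|auto]. Qed.

Lemma is_poly_binom K a : is_poly K (fun t => (t + a) ^ K - t ^ K).
Proof.
  induction K.
  - eapply is_poly_ext; [|apply (is_poly_zero 0)]. intros; simpl; ring.
  - eapply is_poly_ext; [|apply is_poly_plus; [apply is_poly_mulX, IHK| apply is_poly_plus;
        [apply is_poly_lift, (is_poly_scal K a), IHK| apply (is_poly_mono K a)]]].
    intros t; simpl; ring.
Qed.

Lemma is_poly_shift K c a : is_poly K (fun t => poly_eval c (S K) (t + a) - c K * t ^ K).
Proof.
  induction K.
  - eapply is_poly_ext; [|apply (is_poly_zero 0)]. intros; simpl; ring.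
  - eapply is_poly_ext; [|apply is_poly_plus; [apply is_poly_lift, IHK| apply is_poly_plus;
        [apply (is_poly_mono K (c K))| apply (is_poly_scal (S K) (c (S K))), (is_poly_binom (S K) a)]]].
    intros t. change (poly_eval c (S (S K)) (t + a)) with (poly_eval c (S K) (t + a) + c (S K) * (t + a) ^ (S K)).
    change (poly_eval c (S K) (t + a)) with (poly_eval c K (t + a) + c K * (t + a) ^ K). simpl. ring.
Qed.

Lemma poly_shift K c a : exists c', forall t, poly_eval c (S K) (t + a) = c K * t ^ K + poly_eval c' K t.
Proof. destruct (is_poly_shift K c a) as [c' Hc']. exists c'. intros t. rewrite <- Hc'. ring. Qed.

Lemma iter_map_add {X} (T : X -> X) h m y : iter_map (h + m) T y = iter_map h T (iter_map m T y).
Proof. induction h; simpl; auto. rewrite IHh; auto. Qed.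
Open Scope R_scope.

Lemma Rabs_maj2 x : - x <= Rabs x.
Proof. pose proof (Rle_abs (- x)). rewrite Rabs_Ropp in H. auto. Qed.

Lemma cont_const {X} (d : X -> X -> R) c : continuous_fun d (fun _ => c).
Proof. intros x e He; exists 1; split; [lra|]; intros; rewrite Rminus_diag, Rabs_R0; auto. Qed.

Lemma cont_comp {X} (d : X -> X -> R) h F : continuous_fun d h -> continuous_map d F -> continuous_fun d (fun y => h (F y)).
Proof. intros Hh HF x e He. destruct (Hh (F x) e He) as [d1 [Hd1 H1]]. destruct (HF x d1 Hd1) as [d2 [Hd2 H2]].
  exists d2; split; auto. Qed.

Lemma cont_map_comp {X} (d : X -> X -> R) F G : continuous_map d F -> continuous_map d G -> continuous_map d (fun y => G (F y)).
Proof. intros HF HG x e He. destruct (HG (F x) e He) as [d1 [Hd1 H1]]. destruct (HF x d1 Hd1) as [d2 [Hd2 H2]].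
  exists d2; split; auto. Qed.

Lemma cont_iter {X} (d : X -> X -> R) T n : is_metric d -> continuous_map d T -> continuous_map d (fun y => iter_map n T y).
Proof. intros Hm HT. induction n; simpl.
  - intros x e He; exists e; split; auto.
  - apply (cont_map_comp d (fun y => iter_map n T y) T); auto. Qed.

Lemma cont_lin {X} (d : X -> X -> R) f g a b : continuous_fun d f -> continuous_fun d g -> continuous_fun d (fun y => a * f y + b * g y).
Proof. intros Hf Hg x e He.
  destruct (Hf x (e / (2 * (Rabs a + 1))) ltac:(apply Rdiv_lt_0_compat; [lra| pose proof (Rabs_pos a); lra])) as [d1 [Hd1 H1]].
  destruct (Hg x (e / (2 * (Rabs b + 1))) ltac:(apply Rdiv_lt_0_compat; [lra| pose proof (Rabs_pos b); lra])) as [d2 [Hd2 H2]].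
  exists (Rmin d1 d2); split. apply Rmin_pos; auto. intros y Hy.
  assert (Hy1 : d x y < d1) by (eapply Rlt_le_trans; [apply Hy| apply Rmin_l]).
  assert (Hy2 : d x y < d2) by (eapply Rlt_le_trans; [apply Hy| apply Rmin_r]).
  specialize (H1 y Hy1); specialize (H2 y Hy2).
  replace (a * f x + b * g x - (a * f y + b * g y)) with (a * (f x - f y) + b * (g x - g y)) by ring.
  eapply Rle_lt_trans; [apply Rabs_triang|]. rewrite !Rabs_mult.
  assert (Rabs a * Rabs (f x - f y) <= Rabs a * (e / (2 * (Rabs a + 1)))) by (apply Rmult_le_compat_l; [apply Rabs_pos|lra]).
  assert (Rabs b * Rabs (g x - g y) <= Rabs b * (e / (2 * (Rabs b + 1)))) by (apply Rmult_le_compat_l; [apply Rabs_pos|lra]).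
  assert (Rabs a * (e / (2 * (Rabs a + 1))) < e / 2).
  { pose proof (Rabs_pos a). apply (Rmult_lt_reg_r (2 * (Rabs a + 1))). lra.
    field_simplify; [|lra]. nra. }
  assert (Rabs b * (e / (2 * (Rabs b + 1))) < e / 2).
  { pose proof (Rabs_pos b). apply (Rmult_lt_reg_r (2 * (Rabs b + 1))). lra.
    field_simplify; [|lra]. nra. }
  lra.
Qed.

Lemma cont_plus {X} (d : X -> X -> R) f g : continuous_fun d f -> continuous_fun d g -> continuous_fun d (fun y => f y + g y).
Proof. intros Hf Hg. assert (H := cont_lin d f g 1 1 Hf Hg). intros x e He. destruct (H x e He) as [dd [Hdd Hy]].
  exists dd; split; auto. intros y Hy'. specialize (Hy y Hy'). rewrite !Rmult_1_l in Hy. auto. Qed.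

Lemma cont_scal {X} (d : X -> X -> R) f a : continuous_fun d f -> continuous_fun d (fun y => a * f y).
Proof. intros Hf. assert (H := cont_lin d f f a 0 Hf Hf). intros x e He. destruct (H x e He) as [dd [Hdd Hy]].
  exists dd; split; auto. intros y Hy'. specialize (Hy y Hy'). rewrite !Rmult_0_l, !Rplus_0_r in Hy. auto. Qed.

Lemma cont_minus {X} (d : X -> X -> R) f g : continuous_fun d f -> continuous_fun d g -> continuous_fun d (fun y => f y - g y).
Proof. intros Hf Hg. assert (H := cont_lin d f g 1 (-1) Hf Hg). intros x e He. destruct (H x e He) as [dd [Hdd Hy]].
  exists dd; split; auto. intros y Hy'. specialize (Hy y Hy').
  replace (f x - g x - (f y - g y)) with (1 * f x + -1 * g x - (1 * f y + -1 * g y)) by ring. auto. Qed.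

Lemma Rmax_diff a b a' b' : Rabs (Rmax a b - Rmax a' b') <= Rmax (Rabs (a - a')) (Rabs (b - b')).
Proof. unfold Rmax at 1 2. destruct (Rle_dec a b); destruct (Rle_dec a' b');
  apply Rabs_le; pose proof (Rmax_l (Rabs (a - a')) (Rabs (b - b'))); pose proof (Rmax_r (Rabs (a - a')) (Rabs (b - b')));
  pose proof (Rle_abs (a - a')); pose proof (Rle_abs (b - b')); pose proof (Rabs_maj2 (a - a')); pose proof (Rabs_maj2 (b - b'));
  split; lra. Qed.

Lemma cont_max {X} (d : X -> X -> R) f g : continuous_fun d f -> continuous_fun d g -> continuous_fun d (fun y => Rmax (f y) (g y)).
Proof. intros Hf Hg x e He. destruct (Hf x e He) as [d1 [Hd1 H1]]. destruct (Hg x e He) as [d2 [Hd2 H2]].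
  exists (Rmin d1 d2); split. apply Rmin_pos; auto. intros y Hy.
  assert (Hy1 : d x y < d1) by (eapply Rlt_le_trans; [apply Hy| apply Rmin_l]).
  assert (Hy2 : d x y < d2) by (eapply Rlt_le_trans; [apply Hy| apply Rmin_r]).
  eapply Rle_lt_trans; [apply Rmax_diff|]. apply Rmax_lub_lt; auto. Qed.

Lemma cont_min {X} (d : X -> X -> R) f g : continuous_fun d f -> continuous_fun d g -> continuous_fun d (fun y => Rmin (f y) (g y)).
Proof. intros Hf Hg.
  assert (E : forall y, Rmin (f y) (g y) = - Rmax (- f y) (- g y)).
  { intros y. unfold Rmin, Rmax. destruct (Rle_dec (f y) (g y)); destruct (Rle_dec (- f y) (- g y)); lra. }
  assert (H : continuous_fun d (fun y => -1 * Rmax (-1 * f y) (-1 * g y))).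
  { apply cont_scal, cont_max; apply cont_scal; auto. }
  intros x e He. destruct (H x e He) as [dd [Hdd Hy]]. exists dd; split; auto. intros y Hy'. specialize (Hy y Hy').
  rewrite !E. replace (-1 * f x) with (- f x) in Hy by ring. replace (-1 * g x) with (- g x) in Hy by ring.
  replace (-1 * f y) with (- f y) in Hy by ring. replace (-1 * g y) with (- g y) in Hy by ring.
  replace (- Rmax (- f x) (- g x) - - Rmax (- f y) (- g y)) with (-1 * Rmax (- f x) (- g x) - -1 * Rmax (- f y) (- g y)) by ring. auto.
Qed.

Lemma cont_sumR {X} (d : X -> X -> R) (h : nat -> X -> R) n : (forall j, continuous_fun d (h j)) ->
  continuous_fun d (fun y => sumR (fun j => h j y) n).
Proof. intros H. induction n; simpl. apply cont_const. apply (cont_plus d (fun y => sumR (fun j => h j y) n) (h n)); auto. Qed.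

Lemma cont_finite {X} (d : X -> X -> R) (h : nat -> X -> R) M y e : (forall j, continuous_fun d (h j)) -> e > 0 ->
  exists dl, dl > 0 /\ forall y', d y y' < dl -> forall n, (n < M)%nat -> Rabs (h n y - h n y') < e.
Proof. intros H He. induction M.
  - exists 1; split; [lra|]; intros; lia.
  - destruct IHM as [d1 [Hd1 H1]]. destruct (H M y e He) as [d2 [Hd2 H2]].
    exists (Rmin d1 d2); split. apply Rmin_pos; auto. intros y' Hy n Hn.
    assert (Hy1 : d y y' < d1) by (eapply Rlt_le_trans; [apply Hy| apply Rmin_l]).
    assert (Hy2 : d y y' < d2) by (eapply Rlt_le_trans; [apply Hy| apply Rmin_r]).
    destruct (Nat.eq_dec n M). subst; auto. apply H1; auto; lia. Qed.

Lemma choice_nat {A : Type} (P : nat -> A -> Prop) : (forall n, exists a, P n a) -> exists f : nat -> A, forall n, P n (f n).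
Proof. intros H. exists (fun n => proj1_sig (constructive_indefinite_description _ (H n))).
  intros n. exact (proj2_sig (constructive_indefinite_description _ (H n))). Qed.

Lemma phi_ge {phi : nat -> nat} : (forall n, (phi n < phi (S n))%nat) -> forall n, (n <= phi n)%nat.
Proof. intros H n; induction n; [lia| specialize (H n); lia]. Qed.

Lemma cont_bounded {X} (d : X -> X -> R) h : is_metric d -> metric_compact d -> continuous_fun d h ->
  exists B, forall y, Rabs (h y) <= B.
Proof.
  intros Hm Hc Hh. apply NNPP; intros Hn.
  assert (H : forall n : nat, exists y, Rabs (h y) > INR n).
  { intros n. apply NNPP; intros H'. apply Hn. exists (INR n). intros y. apply Rnot_lt_le. intros Hy; apply H'; exists y; auto. }
  destruct (choice_nat _ H) as [u Hu].
  destruct (Hc u) as [phi [l [Hphi Hconv]]].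
  destruct (Hh l 1 ltac:(lra)) as [dl [Hdl Hl]].
  destruct (Hconv dl Hdl) as [I HI].
  destruct (INR_unbounded (Rabs (h l) + 1)) as [n0 Hn0].
  set (i := Nat.max I n0).
  assert (Hd : d (u (phi i)) l < dl) by (apply HI; unfold i; lia).
  destruct Hm as [_ [_ [Hsym _]]]. rewrite Hsym in Hd. specialize (Hl _ Hd).
  specialize (Hu (phi i)). assert (n0 <= phi i)%nat by (pose proof (phi_ge Hphi i); unfold i in *; lia).
  apply le_INR in H0. pose proof (Rabs_triang_inv (h (u (phi i))) (h l)).
  rewrite <- Rabs_Ropp in Hl. replace (- (h l - h (u (phi i)))) with (h (u (phi i)) - h l) in Hl by ring. lra.
Qed.

Lemma dini {X} (d : X -> X -> R) (Z : nat -> X -> R) th : is_metric d -> metric_compact d ->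
  (forall n, continuous_fun d (Z n)) -> (forall n y, Z (S n) y <= Z n y) ->
  (forall y, exists n, Z n y < th) -> exists n, forall y, Z n y < th.
Proof.
  intros Hm Hc HZ Hdec Hpt. apply NNPP; intros Hn.
  assert (Hmono : forall n m y, (n <= m)%nat -> Z m y <= Z n y).
  { intros n m y Hnm. induction Hnm; [lra| specialize (Hdec m y); lra]. }
  assert (H : forall n, exists y, Z n y >= th).
  { intros n. apply NNPP; intros H'. apply Hn. exists n. intros y. apply Rnot_ge_lt. intros Hy; apply H'; exists y; auto. }
  destruct (choice_nat _ H) as [u Hu].
  destruct (Hc u) as [phi [l [Hphi Hconv]]].
  destruct (Hpt l) as [n0 Hn0].
  destruct (HZ n0 l (th - Z n0 l) ltac:(lra)) as [dl [Hdl Hl]].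
  destruct (Hconv dl Hdl) as [I HI].
  set (i := Nat.max I n0).
  assert (Hd : d (u (phi i)) l < dl) by (apply HI; unfold i; lia).
  destruct Hm as [_ [_ [Hsym _]]]. rewrite Hsym in Hd. specialize (Hl _ Hd).
  assert (n0 <= phi i)%nat by (pose proof (phi_ge Hphi i); unfold i in *; lia).
  specialize (Hu (phi i)). pose proof (Hmono _ _ (u (phi i)) H0).
  pose proof (Rle_abs (Z n0 l - Z n0 (u (phi i)))). pose proof (Rabs_maj2 (Z n0 l - Z n0 (u (phi i)))). lra.
Qed.

Definition supR {I : Type} (F : I -> R) : R :=
  epsilon (inhabits 0) (fun s => is_lub (fun r => exists i, r = F i) s).

Lemma supR_spec {I : Type} (F : I -> R) B (i0 : I) : (forall i, F i <= B) -> is_lub (fun r => exists i, r = F i) (supR F).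
Proof. intros HB. unfold supR. apply epsilon_spec.
  destruct (completeness (fun r => exists i, r = F i)) as [s Hs].
  exists B; intros r [i ->]; auto. exists (F i0), i0; auto. exists s; auto. Qed.

Lemma supR_ub {I : Type} (F : I -> R) B i : (forall i, F i <= B) -> F i <= supR F.
Proof. intros HB. destruct (supR_spec F B i HB) as [H _]. apply H. exists i; auto. Qed.

Lemma supR_le {I : Type} (F : I -> R) B (i0 : I) b : (forall i, F i <= B) -> (forall i, F i <= b) -> supR F <= b.
Proof. intros HB Hb. destruct (supR_spec F B i0 HB) as [_ H]. apply H. intros r [i ->]; auto. Qed.
Open Scope R_scope.

Definition pos_state {X : Type} (d : X -> X -> R) (L : (X -> R) -> R) : Prop :=
  (forall f g a b, continuous_fun d f -> continuous_fun d g ->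
     L (fun x => a * f x + b * g x) = a * L f + b * L g) /\
  (forall f, continuous_fun d f -> (forall x, 0 <= f x) -> 0 <= L f) /\
  L (fun _ => 1) = 1.

Lemma inv_pos_state {X} (d : X -> X -> R) T L : invariant_state d T L -> pos_state d L.
Proof. intros [H1 [H2 [H3 _]]]; repeat split; auto. Qed.

Section LS.
Lemma L_ext {X} (L : (X -> R) -> R) f g : (forall y, f y = g y) -> L f = L g.
Proof. intros H. f_equal. apply functional_extensionality; auto. Qed.

Lemma L_plus {X} d (L : (X -> R) -> R) f g : pos_state d L -> continuous_fun d f -> continuous_fun d g ->
  L (fun y => f y + g y) = L f + L g.
Proof. intros [Hl _] Hf Hg. rewrite (L_ext L _ (fun y => 1 * f y + 1 * g y)) by (intros; ring).
  rewrite Hl; auto; ring. Qed.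

Lemma L_minus {X} d (L : (X -> R) -> R) f g : pos_state d L -> continuous_fun d f -> continuous_fun d g ->
  L (fun y => f y - g y) = L f - L g.
Proof. intros [Hl _] Hf Hg. rewrite (L_ext L _ (fun y => 1 * f y + -1 * g y)) by (intros; ring).
  rewrite Hl; auto; ring. Qed.

Lemma L_const {X} d (L : (X -> R) -> R) c : pos_state d L -> L (fun _ => c) = c.
Proof. intros [Hl [_ H1]]. rewrite (L_ext L _ (fun y => c * (fun _ => 1) y + 0 * (fun _ => 1) y)) by (intros; ring).
  rewrite Hl by apply cont_const. rewrite H1; ring. Qed.

Lemma L_mono {X} d (L : (X -> R) -> R) f g : pos_state d L -> continuous_fun d f -> continuous_fun d g ->
  (forall y, f y <= g y) -> L f <= L g.
Proof. intros HL Hf Hg H. assert (0 <= L (fun y => g y - f y)).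
  { destruct HL as [_ [Hp _]]. apply Hp. apply cont_minus; auto. intros; specialize (H x); lra. }
  rewrite (L_minus d L) in H0; auto. lra. Qed.

Lemma L_sumR {X} d (L : (X -> R) -> R) (h : nat -> X -> R) n : pos_state d L -> (forall j, continuous_fun d (h j)) ->
  L (fun y => sumR (fun j => h j y) n) = sumR (fun j => L (h j)) n.
Proof. intros HL Hh. induction n; simpl.
  - apply (L_const d L 0 HL).
  - rewrite (L_plus d L (fun y => sumR (fun j => h j y) n) (h n)); auto. rewrite IHn; auto.
    apply cont_sumR; auto. Qed.
End LS.

Fixpoint Wf {X : Type} (u : nat -> X -> R) (j l : nat) (y : X) : R :=
  match l with O => u j y | S l' => Rmax (Wf u j l' y) (u (j + S l')%nat y) end.

Lemma W_cont {X} d (u : nat -> X -> R) j l : (forall M, continuous_fun d (u M)) -> continuous_fun d (Wf u j l).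
Proof. intros H. induction l; simpl. apply H. change (continuous_fun d (fun y => Rmax (Wf u j l y) (u (j + S l)%nat y))).
  apply cont_max; auto. Qed.

Lemma W_ge {X} (u : nat -> X -> R) j l y i : (i <= l)%nat -> u (j + i)%nat y <= Wf u j l y.
Proof. induction l; simpl; intros Hi.
  - replace i with O by lia. rewrite Nat.add_0_r; lra.
  - destruct (Nat.eq_dec i (S l)). subst; apply Rmax_r. eapply Rle_trans; [apply IHl; lia| apply Rmax_l]. Qed.

Lemma W_le {X} (u : nat -> X -> R) j l y b : (forall i, (i <= l)%nat -> u (j + i)%nat y <= b) -> Wf u j l y <= b.
Proof. induction l; simpl; intros H.
  - specialize (H O ltac:(lia)). rewrite Nat.add_0_r in H; auto.
  - apply Rmax_lub. apply IHl; intros; apply H; lia. apply H; lia. Qed.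

Lemma W_mono {X} (u : nat -> X -> R) j l l' y : (l <= l')%nat -> Wf u j l y <= Wf u j l' y.
Proof. intros H. apply W_le. intros i Hi. apply W_ge. lia. Qed.

Lemma W_shift {X} (u : nat -> X -> R) j n l y : (j <= n)%nat -> Wf u n l y <= Wf u j (n - j + l) y.
Proof. intros H. apply W_le. intros i Hi. replace (n + i)%nat with (j + (n - j + i))%nat by lia. apply W_ge. lia. Qed.

Fixpoint Zr (a : nat -> R) (n : nat) : R :=
  match n with O => a O | S m => Rmin (Zr a m) (a (S m)) end.

Lemma Zr_le a n j : (j <= n)%nat -> Zr a n <= a j.
Proof. induction n; simpl; intros H. replace j with O by lia; lra.
  destruct (Nat.eq_dec j (S n)). subst; apply Rmin_r. eapply Rle_trans; [apply Rmin_l| apply IHn; lia]. Qed.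

Lemma min_gap (a b : nat -> R) v m : (forall j, (j <= m)%nat -> v <= b j /\ a j <= b j) ->
  v - Rmin v (Zr a m) <= sumR (fun j => b j - a j) (S m).
Proof.
  induction m; intros H.
  - simpl. destruct (H O ltac:(lia)). unfold Rmin; destruct (Rle_dec v (a O)); lra.
  - assert (IH := IHm ltac:(intros; apply H; lia)). destruct (H (S m) ltac:(lia)).
    assert (0 <= sumR (fun j => b j - a j) (S m)).
    { apply Rle_trans with (sumR (fun _ => 0) (S m)). rewrite sumR_const; lra.
      apply sumR_le. intros j Hj. destruct (H j ltac:(lia)); lra. }
    change (sumR (fun j => b j - a j) (S (S m))) with (sumR (fun j => b j - a j) (S m) + (b (S m) - a (S m))).
    simpl Zr. unfold Rmin in *. destruct (Rle_dec (Zr a m) (a (S m))); destruct (Rle_dec v (Zr a m));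
    destruct (Rle_dec v (a (S m))); try lra.
Qed.

Fixpoint Zf {X : Type} (a : nat -> X -> R) (n : nat) (y : X) : R :=
  match n with O => a O y | S m => Rmin (Zf a m y) (a (S m) y) end.

Lemma Zf_Zr {X} (a : nat -> X -> R) n y : Zf a n y = Zr (fun j => a j y) n.
Proof. induction n; simpl; auto. rewrite IHn; auto. Qed.

Lemma Zf_cont {X} d (a : nat -> X -> R) n : (forall j, continuous_fun d (a j)) -> continuous_fun d (Zf a n).
Proof. intros H. induction n; simpl. apply H. change (continuous_fun d (fun y => Rmin (Zf a n y) (a (S n) y))).
  apply cont_min; auto. Qed.

Lemma geom_sum a n : sumR (fun j => a * (/ 2) ^ j) n = 2 * a - 2 * a * (/ 2) ^ n.
Proof. induction n; simpl sumR. simpl; ring. rewrite IHn. simpl. field. Qed.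

Lemma daniell {X} (d : X -> X -> R) (L : (X -> R) -> R) (g : nat -> X -> R) C :
  is_metric d -> metric_compact d -> pos_state d L ->
  (forall M, continuous_fun d (g M)) -> (forall M y, 0 <= g M y <= C) ->
  (forall y e, e > 0 -> exists M0, forall M, (M >= M0)%nat -> g M y <= e) ->
  forall e, e > 0 -> exists M, L (g M) <= e.
Proof.
  intros Hm Hc HL Hg Hb Hpt e He. apply NNPP; intros Hn.
  assert (HgL : forall M, L (g M) > e).
  { intros M. apply Rnot_le_gt. intros H; apply Hn; exists M; auto. }
  set (u := fun M y => Rmax 0 (g M y - e / 2)).
  assert (Hu : forall M, continuous_fun d (u M)).
  { intros M. unfold u. apply cont_max. apply cont_const. apply cont_minus; auto. apply cont_const. }
  assert (Hu0 : forall M y, 0 <= u M y) by (intros; apply Rmax_l).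
  assert (HuC : forall M y, u M y <= C).
  { intros M y. unfold u. destruct (Hb M y). apply Rmax_lub; lra. }
  assert (HLu : forall M, L (u M) >= e / 2).
  { intros M. assert (L (g M) <= L (fun y => u M y + e / 2)).
    { apply (L_mono d L); auto. apply cont_plus; auto. apply cont_const.
      intros y. unfold u. pose proof (Rmax_r 0 (g M y - e / 2)). lra. }
    rewrite (L_plus d L) in H; auto; [|apply cont_const]. rewrite (L_const d L) in H; auto.
    specialize (HgL M). lra. }
  set (t := fun j : nat => e / 8 * (/ 2) ^ j).
  assert (Ht : forall j, t j > 0). { intros j. unfold t. apply Rmult_lt_0_compat. lra. apply pow_lt; lra. }
  assert (HWC : forall j l, L (Wf u j l) <= C).
  { intros j l. rewrite <- (L_const d L C HL). apply (L_mono d L); auto. apply W_cont; auto. apply cont_const.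
    intros y. apply W_le. intros; auto. }
  assert (Hsel : forall j, exists l, forall l', L (Wf u j l') <= L (Wf u j l) + t j).
  { intros j. set (F := fun l => L (Wf u j l)).
    destruct (supR_spec F C O (HWC j)) as [Hub Hlub].
    apply NNPP; intros H. 
    assert (is_upper_bound (fun r => exists i, r = F i) (supR F - t j)).
    { intros r [i ->]. apply Rnot_lt_le. intros Hi. apply H. exists i. intros l'.
      assert (F l' <= supR F) by (apply Hub; exists l'; auto). unfold F in *. lra. }
    specialize (Hlub _ H0). specialize (Ht j). lra. }
  destruct (choice_nat _ Hsel) as [ls Hls].
  set (a := fun j => Wf u j (ls j)).
  assert (Ha : forall j, continuous_fun d (a j)) by (intros; apply W_cont; auto).
  set (Z := Zf a).
  assert (HZc : forall n, continuous_fun d (Z n)) by (intros; apply Zf_cont; auto).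
  assert (HZL : forall n, L (Z n) >= e / 4).
  { intros n. destruct n as [|m].
    - change (L (a O) >= e / 4). assert (L (u O) <= L (a O)).
      { apply (L_mono d L); auto. intros y. unfold a. apply (W_ge u O (ls O) y O). lia. }
      specialize (HLu O). lra.
    - set (n := S m).
      set (b := fun j => Wf u j (Nat.max (ls j) (n - j + ls n))).
      assert (Hbc : forall j, continuous_fun d (b j)) by (intros; apply W_cont; auto).
      assert (Hpw : forall y, a n y - Z n y <= sumR (fun j => b j y - a j y) n).
      { intros y. unfold Z, n. simpl Zf. rewrite Zf_Zr. rewrite Rmin_comm.
        apply (min_gap (fun j => a j y) (fun j => b j y) (a (S m) y) m).
        intros j Hj. split.
        - unfold a, b. eapply Rle_trans; [apply (W_shift u j (S m)); lia|]. apply W_mono; fold n; lia.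
        - unfold a, b. apply W_mono; lia. }
      assert (L (fun y => a n y - Z n y) <= L (fun y => sumR (fun j => b j y - a j y) n)).
      { apply (L_mono d L); auto. apply cont_minus; auto. apply cont_sumR. intros; apply cont_minus; auto. }
      rewrite (L_minus d L) in H; auto. rewrite (L_sumR d L (fun j y => b j y - a j y)) in H; auto;
        [|intros; apply cont_minus; auto].
      assert (sumR (fun j => L (fun y => b j y - a j y)) n <= sumR t n).
      { apply sumR_le. intros j _. rewrite (L_minus d L); auto. unfold b, a. specialize (Hls j (Nat.max (ls j) (n - j + ls n))). lra. }
      assert (sumR t n <= e / 4).
      { unfold t. rewrite geom_sum. assert (0 <= (/ 2) ^ n) by (apply pow_le; lra). assert (0 <= e / 8 * (/ 2) ^ n) by (apply Rmult_le_pos; lra). lra. }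
      assert (L (u n) <= L (a n)).
      { apply (L_mono d L); auto. intros y. unfold a. pose proof (W_ge u n (ls n) y O ltac:(lia)) as HW. rewrite Nat.add_0_r in HW. auto. }
      specialize (HLu n). lra. }
  assert (Hex : exists y, forall n, Z n y >= e / 8).
  { apply NNPP; intros H.
    assert (Hall : forall y, exists n, Z n y < e / 8).
    { intros y. apply NNPP; intros H'. apply H. exists y. intros n. apply Rnot_lt_ge. intros Hl. apply H'. exists n; auto. }
    destruct (dini d Z (e / 8) Hm Hc HZc) as [n Hn']; auto.
    { intros n y. unfold Z. simpl. apply Rmin_l. }
    assert (L (Z n) <= L (fun _ => e / 8)).
    { apply (L_mono d L); auto. apply cont_const. intros y. specialize (Hn' y). lra. }
    rewrite (L_const d L) in H0; auto. specialize (HZL n). lra. }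
  destruct Hex as [y Hy].
  destruct (Hpt y (e / 2) ltac:(lra)) as [M0 HM0].
  specialize (Hy M0). assert (Z M0 y <= a M0 y) by (unfold Z; rewrite Zf_Zr; apply (Zr_le (fun j => a j y)); lia).
  assert (a M0 y <= 0).
  { unfold a. apply W_le. intros i _. unfold u. specialize (HM0 (M0 + i)%nat ltac:(lia)). apply Rmax_lub; lra. }
  lra.
Qed.

Module UF.
Import mathcomp.boot.ssreflect mathcomp.classical.boolp mathcomp.classical.classical_sets mathcomp.classical.filter.
Lemma ultra_nat (S : nat -> Prop) : (forall n, exists m, (n <= m)%nat /\ S m) ->
  exists U : (nat -> Prop) -> Prop,
    (forall A B : nat -> Prop, (forall n, A n -> B n) -> U A -> U B) /\
    (forall A B, U A -> U B -> U (fun n => A n /\ B n)) /\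
    ~ U (fun _ => False) /\
    (forall A, U A \/ U (fun n => ~ A n)) /\
    U S /\ (forall n0, U (fun n => (n0 <= n)%nat)).
Proof.
move=> HS.
pose F := fun A : set nat => exists n0, forall n, (n0 <= n)%nat -> S n -> A n.
have FF : ProperFilter F.
  apply: Build_ProperFilter.
    move=> [n0 H]; have [m [Hm Sm]] := HS n0; exact: (H m Hm Sm).
  split.
  - by exists 0%nat.
  - move=> A B [a Ha] [b Hb]; exists (Nat.max a b) => n Hn Sn; split.
      apply: Ha => //; exact: (Nat.le_trans _ _ _ (Nat.le_max_l a b) Hn).
    apply: Hb => //; exact: (Nat.le_trans _ _ _ (Nat.le_max_r a b) Hn).
  - move=> A B AB [a Ha]; exists a => n Hn Sn; exact/AB/Ha.
have [G [GU FG]] := ultraFilterLemma FF.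
exists G; split; [|split; [|split; [|split; [|split]]]].
- move=> A B AB GA; apply: filterS GA; exact: AB.
- move=> A B GA GB; exact: filterI.
- exact: filter_not_empty.
- move=> A; exact: in_ultra_setVsetC.
- apply: FG; by exists 0%nat.
- move=> n0; apply: FG; by exists n0.
Qed.
End UF.

Open Scope R_scope.

Lemma Rabs_le_between a B : Rabs a <= B -> - B <= a <= B.
Proof. intros H. pose proof (Rle_abs a). pose proof (Rabs_maj2 a). lra. Qed.

Definition is_uf (U : (nat -> Prop) -> Prop) : Prop :=
  (forall A B : nat -> Prop, (forall n, A n -> B n) -> U A -> U B) /\
  (forall A B, U A -> U B -> U (fun n => A n /\ B n)) /\
  ~ U (fun _ => False) /\
  (forall A, U A \/ U (fun n => ~ A n)) /\
  (forall n0, U (fun n => (n0 <= n)%nat)).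

Definition ulim_is (U : (nat -> Prop) -> Prop) (a : nat -> R) (l : R) : Prop :=
  forall e, e > 0 -> U (fun n => Rabs (a n - l) < e).

Section UL.
Lemma ul_unique U a l l' : is_uf U -> ulim_is U a l -> ulim_is U a l' -> l = l'.
Proof. intros [HS [HI [H0 _]]] H1 H2. apply NNPP; intros Hne.
  set (e := Rabs (l - l') / 2). assert (He : e > 0) by (unfold e; assert (Rabs (l - l') > 0) by (apply Rabs_pos_lt; lra); lra).
  apply H0. apply (HS (fun n => Rabs (a n - l) < e /\ Rabs (a n - l') < e)).
  intros n [Ha Hb]. assert (Rabs (l - l') <= Rabs (a n - l) + Rabs (a n - l')).
  { replace (l - l') with (- (a n - l) + (a n - l')) by ring. eapply Rle_trans; [apply Rabs_triang|]. rewrite Rabs_Ropp; lra. }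
  unfold e in *; lra. apply HI; auto. Qed.

Lemma ul_exists U a B : is_uf U -> (forall n, Rabs (a n) <= B) -> exists l, ulim_is U a l.
Proof. intros [HS [HI [H0 [Hu _]]]] HB.
  set (E := fun r => U (fun n => r <= a n)).
  assert (HT : forall A : nat -> Prop, (forall n, A n) -> U A).
  { intros A HA. destruct (Hu (fun _ => False)) as [H|H]. contradiction. apply (HS _ _ (fun n _ => HA n) H). }
  destruct (completeness E) as [l [Hub Hlub]].
  { exists (B + 1). intros r Hr. apply Rnot_lt_le; intros Hlt. apply H0. apply (HS (fun n => r <= a n)); auto.
    intros n Hn. specialize (HB n). apply Rabs_le_between in HB; lra. }
  { exists (- B). apply HT. intros n. specialize (HB n). apply Rabs_le_between in HB; lra. }
  exists l. intros e He.
  assert (H1 : exists r, E r /\ r > l - e).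
  { apply NNPP; intros H. assert (l <= l - e); [|lra]. apply Hlub. intros r Hr. apply Rnot_lt_le. intros Hlt. apply H. exists r; split; auto. }
  destruct H1 as [r [Hr Hrl]].
  assert (H2 : ~ E (l + e / 2)) by (intros H; specialize (Hub _ H); lra).
  destruct (Hu (fun n => l + e / 2 <= a n)) as [H3|H3]. contradiction.
  apply (HS (fun n => r <= a n /\ ~ (l + e / 2 <= a n))). intros n [Ha Hb]. apply Rabs_def1; lra. apply HI; auto. Qed.

Lemma ul_plus U a b la lb : is_uf U -> ulim_is U a la -> ulim_is U b lb -> ulim_is U (fun n => a n + b n) (la + lb).
Proof. intros [HS [HI _]] Ha Hb e He. apply (HS (fun n => Rabs (a n - la) < e / 2 /\ Rabs (b n - lb) < e / 2)).
  intros n [H1 H2]. replace (a n + b n - (la + lb)) with ((a n - la) + (b n - lb)) by ring.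
  eapply Rle_lt_trans; [apply Rabs_triang|lra]. apply HI; [apply Ha| apply Hb]; lra. Qed.

Lemma ul_scal U a la r : is_uf U -> ulim_is U a la -> ulim_is U (fun n => r * a n) (r * la).
Proof. intros [HS _] Ha e He. apply (HS (fun n => Rabs (a n - la) < e / (Rabs r + 1))).
  intros n H. replace (r * a n - r * la) with (r * (a n - la)) by ring. rewrite Rabs_mult.
  pose proof (Rabs_pos r). pose proof (Rabs_pos (a n - la)).
  apply Rle_lt_trans with ((Rabs r + 1) * Rabs (a n - la)). nra.
  apply (Rmult_lt_compat_l (Rabs r + 1)) in H; [|lra]. replace ((Rabs r + 1) * (e / (Rabs r + 1))) with e in H by (field; lra). auto.
  apply Ha. apply Rdiv_lt_0_compat; pose proof (Rabs_pos r); lra. Qed.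

Lemma ul_ext U a b l : is_uf U -> (forall n, a n = b n) -> ulim_is U a l -> ulim_is U b l.
Proof. intros [HS _] E H e He. apply (HS (fun n => Rabs (a n - l) < e)); [|apply H; auto]. intros n H'. rewrite <- E; exact H'. Qed.

Lemma ul_lower U a l r : is_uf U -> U (fun n => r <= a n) -> ulim_is U a l -> r <= l.
Proof. intros [HS [HI [H0 _]]] Hr Hl. apply Rnot_lt_le; intros Hlt. apply H0.
  apply (HS (fun n => r <= a n /\ Rabs (a n - l) < r - l)). intros n [H1 H2]. apply Rabs_def2 in H2. lra.
  apply HI; auto. apply Hl; lra. Qed.

Lemma ul_event U a c : is_uf U -> (forall e, e > 0 -> exists n0, forall n, (n >= n0)%nat -> Rabs (a n - c) < e) -> ulim_is U a c.
Proof. intros [HS [_ [_ [_ Hn]]]] H e He. destruct (H e He) as [n0 Hn0]. apply (HS _ _ (fun n Hn' => Hn0 n Hn') (Hn n0)). Qed.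
End UL.

Definition Ulim (U : (nat -> Prop) -> Prop) (a : nat -> R) : R := epsilon (inhabits 0) (ulim_is U a).

Lemma Ulim_eq U a l : is_uf U -> ulim_is U a l -> Ulim U a = l.
Proof. intros HU H. unfold Ulim. apply (ul_unique U a); auto. apply epsilon_spec. exists l; auto. Qed.

Definition avg {X : Type} (T : X -> X) (x : X) (h : X -> R) (N : nat) : R :=
  sumR (fun m => h (iter_map m T x)) N / INR N.

Lemma avg_bound {X} (T : X -> X) x h B : (forall y, Rabs (h y) <= B) -> forall N, Rabs (avg T x h N) <= B.
Proof. intros HB N. assert (0 <= B) by (specialize (HB x); pose proof (Rabs_pos (h x)); lra).
  unfold avg. destruct N. simpl. unfold Rdiv; rewrite Rmult_0_l, Rabs_R0; auto.
  assert (INR (S N) > 0) by (apply lt_0_INR; lia).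
  unfold Rdiv. rewrite Rabs_mult, Rabs_inv, (Rabs_right (INR (S N))) by lra.
  apply (Rmult_le_reg_r (INR (S N))); auto. rewrite Rmult_assoc, Rinv_l by lra.
  eapply Rle_trans; [rewrite Rmult_1_r; apply sumR_abs|]. eapply Rle_trans; [apply (sumR_le _ (fun _ => B)); intros; apply HB|].
  rewrite sumR_const; lra. Qed.

Lemma generic {X} (d : X -> X -> R) T L x G :
  is_metric d -> metric_compact d -> continuous_map d T -> invariant_state d T L ->
  (forall L1 L2, invariant_state d T L1 -> invariant_state d T L2 -> forall f, continuous_fun d f -> L1 f = L2 f) ->
  continuous_fun d G -> forall e, e > 0 -> exists N0, forall N, (N >= N0)%nat -> avg T x G N <= L G + e.
Proof.
  intros Hm Hc HT HL Huniq HG e He. apply NNPP; intros Hn.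
  assert (HS : forall n, exists m, (n <= m)%nat /\ avg T x G m > L G + e).
  { intros n. apply NNPP; intros H. apply Hn. exists n. intros N HN. apply Rnot_gt_le. intros H'. apply H. exists N; auto. }
  destruct (UF.ultra_nat _ HS) as [U [U1 [U2 [U3 [U4 [US U5]]]]]].
  assert (HU : is_uf U) by (repeat split; auto).
  set (L' := fun h => Ulim U (avg T x h)).
  assert (Hex : forall h, continuous_fun d h -> ulim_is U (avg T x h) (L' h)).
  { intros h Hh. destruct (cont_bounded d h Hm Hc Hh) as [B HB]. destruct (ul_exists U _ B HU (avg_bound T x h B HB)) as [l Hl].
    unfold L'. rewrite (Ulim_eq U _ l); auto. }
  assert (HI : invariant_state d T L').
  { split; [|split; [|split]].
    - intros f g a b Hf Hg. apply Ulim_eq; auto.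
      eapply ul_ext; [auto| |apply ul_plus; [auto|apply ul_scal; [auto| apply (Hex f Hf)]|apply ul_scal; [auto|apply (Hex g Hg)]]].
      intros n. unfold avg. rewrite sumR_plus, !sumR_scal. unfold Rdiv. ring.
    - intros f Hf Hpos. apply (ul_lower U (avg T x f)); auto. apply U1 with (fun _ => True); auto.
      intros n _. unfold avg. destruct n. simpl; unfold Rdiv; lra. unfold Rdiv; apply Rmult_le_pos.
      apply Rle_trans with (sumR (fun _ => 0) (S n)). rewrite sumR_const; lra. apply sumR_le; intros; apply Hpos.
      left; apply Rinv_0_lt_compat, lt_0_INR; lia.
      destruct (U4 (fun _ => False)); [contradiction|]. apply (U1 _ _ (fun _ _ => I) H).
    - apply Ulim_eq; auto. apply ul_event; auto. intros e' He'. exists 1%nat. intros n Hn'.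
      unfold avg. rewrite sumR_const. replace (INR n * 1 / INR n - 1) with 0. rewrite Rabs_R0; lra.
      field. apply not_0_INR; lia.
    - intros f Hf. destruct (cont_bounded d f Hm Hc Hf) as [B HB]. apply Ulim_eq; auto.
      replace (L' f) with (L' f + 0) by ring.
      apply (ul_ext U (fun n => avg T x f n + (f (iter_map n T x) - f x) / INR n)); auto.
      + intros n. unfold avg. simpl. rewrite (sumR_succ (fun m => f (iter_map m T x))). simpl. unfold Rdiv. ring.
      + apply ul_plus; auto. apply ul_event; auto. intros e' He'.
        assert (0 <= B) by (specialize (HB x); pose proof (Rabs_pos (f x)); lra).
        destruct (INR_unbounded (2 * B / e')) as [n0 Hn0]. exists (Nat.max n0 1). intros n Hn'.
        assert (INR n >= INR n0) by (apply Rle_ge, le_INR; lia). assert (INR n > 0) by (apply lt_0_INR; lia).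
        rewrite Rminus_0_r. unfold Rdiv. rewrite Rabs_mult, Rabs_inv, (Rabs_right (INR n)) by lra.
        assert (Rabs (f (iter_map n T x) - f x) <= 2 * B).
        { eapply Rle_trans; [apply Rabs_triang|]. rewrite Rabs_Ropp. pose proof (HB x); pose proof (HB (iter_map n T x)); lra. }
        apply (Rmult_lt_reg_r (INR n)); auto. rewrite Rmult_assoc, Rinv_l by lra. rewrite Rmult_1_r.
        assert (2 * B < e' * INR n); [|lra].
        assert (Hq : 2 * B / e' < INR n) by lra. apply (Rmult_lt_compat_l e') in Hq; auto.
        replace (e' * (2 * B / e')) with (2 * B) in Hq by (field; lra). lra. }
  assert (HE := Huniq L' L HI HL G HG).
  assert (L G + e <= L' G).
  { apply (ul_lower U (avg T x G)); auto. apply (U1 _ _ (fun n (H : avg T x G n > L G + e) => Rlt_le _ _ H) US). }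
  lra.
Qed.
Open Scope R_scope.

Definition gfun {X : Type} (k : nat) (al : R) (fr fi : X -> R) (T : X -> X) (M : nat) (y : X) : R :=
  supR (fun c : nat -> R => avg_abs (fun n => INR n ^ k * al + poly_eval c k (INR n)) fr fi T y M).

Lemma div_INR_le a b M : (M >= 1)%nat -> a <= INR M * b -> a / INR M <= b.
Proof. intros HM H. assert (INR M > 0) by (apply lt_0_INR; lia). apply (Rmult_le_reg_r (INR M)); auto.
  unfold Rdiv; rewrite Rmult_assoc, Rinv_l by lra. lra. Qed.

Lemma avg_abs_bounds {X} th (fr fi : X -> R) T y M C : 0 <= C -> (forall z, nrm (fr z) (fi z) <= C) ->
  0 <= avg_abs th fr fi T y M <= C.
Proof. intros HC0 HC. rewrite avg_abs_eq. destruct M.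
  simpl. unfold Rdiv. rewrite Rinv_0, Rmult_0_r. lra.
  assert (INR (S M) > 0) by (apply lt_0_INR; lia). split.
  unfold Rdiv; apply Rmult_le_pos. apply nrm_ge0. left; apply Rinv_0_lt_compat; auto.
  apply div_INR_le; [lia|]. eapply Rle_trans; [apply nrm_sum|]. eapply Rle_trans.
  apply (sumR_le _ (fun _ => C)). intros n _. rewrite term_nrm. apply HC. rewrite sumR_const; lra. Qed.

Lemma avg_abs_cont {X} (d : X -> X -> R) (fr fi : X -> R) T M y e :
  is_metric d -> continuous_map d T -> continuous_fun d fr -> continuous_fun d fi -> e > 0 ->
  exists dl, dl > 0 /\ forall y', d y y' < dl -> forall th, Rabs (avg_abs th fr fi T y M - avg_abs th fr fi T y' M) <= e.
Proof.
  intros Hm HT Hfr Hfi He.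
  destruct (cont_finite d (fun n y => fr (iter_map n T y)) M y (e / 2)) as [d1 [Hd1 H1]]; [intros; apply cont_comp; auto; apply cont_iter; auto| lra|].
  destruct (cont_finite d (fun n y => fi (iter_map n T y)) M y (e / 2)) as [d2 [Hd2 H2]]; [intros; apply cont_comp; auto; apply cont_iter; auto| lra|].
  exists (Rmin d1 d2); split. apply Rmin_pos; auto. intros y' Hy th.
  assert (Hy1 : d y y' < d1) by (eapply Rlt_le_trans; [apply Hy| apply Rmin_l]).
  assert (Hy2 : d y y' < d2) by (eapply Rlt_le_trans; [apply Hy| apply Rmin_r]).
  rewrite !avg_abs_eq. destruct M. simpl. unfold Rdiv. rewrite Rinv_0, !Rmult_0_r, Rminus_0_r, Rabs_R0. lra.
  assert (INR (S M) > 0) by (apply lt_0_INR; lia).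
  unfold Rdiv. rewrite <- Rmult_minus_distr_r, Rabs_mult, Rabs_inv, (Rabs_right (INR (S M))) by lra.
  fold (Rdiv (Rabs (nrm (sumR (re_t th fr fi T y) (S M)) (sumR (im_t th fr fi T y) (S M)) -
      nrm (sumR (re_t th fr fi T y') (S M)) (sumR (im_t th fr fi T y') (S M)))) (INR (S M))).
  apply div_INR_le; [lia|]. eapply Rle_trans; [apply nrm_diff_abs|]. rewrite <- !sumR_minus.
  eapply Rle_trans; [apply nrm_sum|]. eapply Rle_trans. apply (sumR_le _ (fun _ => e)). intros n Hn.
  unfold re_t, im_t.
  set (A := 2 * PI * th n).
  replace (cos A * fr (iter_map n T y) - sin A * fi (iter_map n T y) - (cos A * fr (iter_map n T y') - sin A * fi (iter_map n T y')))
    with (cos A * (fr (iter_map n T y) - fr (iter_map n T y')) - sin A * (fi (iter_map n T y) - fi (iter_map n T y'))) by ring.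
  replace (sin A * fr (iter_map n T y) + cos A * fi (iter_map n T y) - (sin A * fr (iter_map n T y') + cos A * fi (iter_map n T y')))
    with (sin A * (fr (iter_map n T y) - fr (iter_map n T y')) + cos A * (fi (iter_map n T y) - fi (iter_map n T y'))) by ring.
  rewrite nrm_rot, nrm_cos_sin, Rmult_1_l. eapply Rle_trans; [apply nrm_abs|].
  specialize (H1 y' Hy1 n Hn); specialize (H2 y' Hy2 n Hn). simpl in H1, H2. lra.
  rewrite sumR_const; lra.
Qed.

Lemma gfun_bounds {X} k al (fr fi : X -> R) T M y C : 0 <= C -> (forall z, nrm (fr z) (fi z) <= C) ->
  0 <= gfun k al fr fi T M y <= C.
Proof. intros HC0 HC. unfold gfun.
  assert (Hb : forall c, avg_abs (fun n => INR n ^ k * al + poly_eval c k (INR n)) fr fi T y M <= C)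
    by (intros; apply (proj2 (avg_abs_bounds _ fr fi T _ M C HC0 HC))). split.
  - pose proof (supR_ub _ C (fun _ => 0) Hb). eapply Rle_trans; [|apply H]. apply (proj1 (avg_abs_bounds _ fr fi T _ M C HC0 HC)).
  - apply (supR_le _ C (fun _ => 0)); intros; apply (proj2 (avg_abs_bounds _ fr fi T _ M C HC0 HC)). Qed.

Lemma gfun_cont {X} (d : X -> X -> R) k al (fr fi : X -> R) T M C :
  is_metric d -> continuous_map d T -> continuous_fun d fr -> continuous_fun d fi -> 0 <= C -> (forall z, nrm (fr z) (fi z) <= C) ->
  continuous_fun d (gfun k al fr fi T M).
Proof.
  intros Hm HT Hfr Hfi HC0 HC y e He.
  destruct (avg_abs_cont d fr fi T M y (e / 2) Hm HT Hfr Hfi ltac:(lra)) as [dl [Hdl H]].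
  exists dl; split; auto. intros y' Hy. specialize (H y' Hy).
  assert (Hb : forall y0 c, avg_abs (fun n => INR n ^ k * al + poly_eval c k (INR n)) fr fi T y0 M <= C)
    by (intros; apply (proj2 (avg_abs_bounds _ fr fi T _ M C HC0 HC))).
  unfold gfun. apply Rabs_def1.
  - assert (supR (fun c : nat -> R => avg_abs (fun n => INR n ^ k * al + poly_eval c k (INR n)) fr fi T y M) <=
            supR (fun c : nat -> R => avg_abs (fun n => INR n ^ k * al + poly_eval c k (INR n)) fr fi T y' M) + e / 2); [|lra].
    apply (supR_le _ C (fun _ => 0)). intros; apply Hb. intros c.
    specialize (H (fun n => INR n ^ k * al + poly_eval c k (INR n))). apply Rabs_le_between in H.
    pose proof (supR_ub (fun c : nat -> R => avg_abs (fun n => INR n ^ k * al + poly_eval c k (INR n)) fr fi T y' M) C c (Hb y')). lra.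
  - assert (supR (fun c : nat -> R => avg_abs (fun n => INR n ^ k * al + poly_eval c k (INR n)) fr fi T y' M) <=
            supR (fun c : nat -> R => avg_abs (fun n => INR n ^ k * al + poly_eval c k (INR n)) fr fi T y M) + e / 2); [|lra].
    apply (supR_le _ C (fun _ => 0)). intros; apply Hb. intros c.
    specialize (H (fun n => INR n ^ k * al + poly_eval c k (INR n))). apply Rabs_le_between in H.
    pose proof (supR_ub (fun c : nat -> R => avg_abs (fun n => INR n ^ k * al + poly_eval c k (INR n)) fr fi T y M) C c (Hb y)). lra.
Qed.
Open Scope R_scope.

Lemma block_bound {X} th (fr fi : X -> R) T x N M C : (M >= 1)%nat -> 0 <= C -> (forall z, nrm (fr z) (fi z) <= C) ->
  INR M * nrm (sumR (re_t th fr fi T x) N) (sumR (im_t th fr fi T x) N) <=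
  sumR (fun m => nrm (sumR (re_t (fun h => th (m + h)%nat) fr fi T (iter_map m T x)) M)
                     (sumR (im_t (fun h => th (m + h)%nat) fr fi T (iter_map m T x)) M)) N
  + INR M * (INR M * (2 * C)).
Proof.
  intros HM HC0 HC.
  set (a := re_t th fr fi T x). set (b := im_t th fr fi T x).
  assert (Hab : forall n, nrm (a n) (b n) <= C) by (intros; unfold a, b; rewrite term_nrm; apply HC).
  assert (INR M > 0) by (apply lt_0_INR; lia).
  rewrite <- (Rabs_right (INR M)) at 1 by lra. rewrite <- nrm_scal.
  rewrite (block_identity a N M), (block_identity b N M).
  set (P1 := sumR (fun m => sumR (fun h => a (m + h)%nat) M) N).
  set (Q1 := sumR (fun m => sumR (fun h => b (m + h)%nat) M) N).
  set (P2 := sumR (fun h => sumR (fun n => a (N + n)%nat - a n) h) M).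
  set (Q2 := sumR (fun h => sumR (fun n => b (N + n)%nat - b n) h) M).
  eapply Rle_trans. replace (P1 - P2) with (P1 + - P2) by ring. replace (Q1 - Q2) with (Q1 + - Q2) by ring.
  apply nrm_triangle. rewrite nrm_opp. apply Rplus_le_compat.
  - unfold P1, Q1. eapply Rle_trans; [apply nrm_sum|]. apply Req_le, sumR_ext. intros m _.
    f_equal; apply sumR_ext; intros h _; unfold a, b, re_t, im_t; rewrite <- iter_map_add;
    rewrite (Nat.add_comm h m); reflexivity.
  - unfold P2, Q2. eapply Rle_trans; [apply nrm_sum|]. eapply Rle_trans.
    apply (sumR_le _ (fun _ => INR M * (2 * C))). intros h Hh.
    eapply Rle_trans; [apply nrm_sum|]. eapply Rle_trans. apply (sumR_le _ (fun _ => 2 * C)).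
    intros n _. replace (a (N + n)%nat - a n) with (a (N + n)%nat + - a n) by ring.
    replace (b (N + n)%nat - b n) with (b (N + n)%nat + - b n) by ring.
    eapply Rle_trans; [apply nrm_triangle|]. rewrite nrm_opp. pose proof (Hab (N + n)%nat); pose proof (Hab n); lra.
    rewrite sumR_const. apply Rmult_le_compat_r; [lra|]. apply le_INR; lia.
    rewrite sumR_const; lra.
Qed.

Lemma int_part_pow z h k : IZR z * INR h ^ k = IZR (z * Z.of_nat (h ^ k)).
Proof. rewrite mult_IZR, <- INR_IZR_INZ, pow_INR. reflexivity. Qed.

Lemma block_term {X} (fr fi : X -> R) T k c al z y m M C : (M >= 1)%nat -> 0 <= C -> (forall w, nrm (fr w) (fi w) <= C) ->
  nrm (sumR (re_t (fun h => poly_eval c (S k) (INR (m + h)%nat)) fr fi T y) M)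
      (sumR (im_t (fun h => poly_eval c (S k) (INR (m + h)%nat)) fr fi T y) M) <=
  INR M * gfun k al fr fi T M y + INR M * (2 * PI * Rabs (c k - IZR z - al) * INR M ^ k * C).
Proof.
  intros HM HC0 HC.
  destruct (poly_shift k c (INR m)) as [c' Hc'].
  set (ps := fun h : nat => (c k - IZR z) * INR h ^ k + poly_eval c' k (INR h)).
  set (ph := fun h : nat => INR h ^ k * al + poly_eval c' k (INR h)).
  destruct (S_per (fun h => poly_eval c (S k) (INR (m + h)%nat)) ps fr fi T y M) as [E1 E2].
  { intros h. exists (z * Z.of_nat (h ^ k))%Z. rewrite <- int_part_pow. unfold ps.
    rewrite plus_INR, Rplus_comm, Hc'. ring. }
  rewrite E1, E2.
  eapply Rle_trans; [apply (S_diff ps ph fr fi T y M C HC)|]. apply Rplus_le_compat.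
  - assert (INR M > 0) by (apply lt_0_INR; lia).
    assert (avg_abs ph fr fi T y M <= gfun k al fr fi T M y).
    { unfold gfun. apply (supR_ub (fun c0 : nat -> R => avg_abs (fun n => INR n ^ k * al + poly_eval c0 k (INR n)) fr fi T y M) C c').
      intros; apply (proj2 (avg_abs_bounds _ fr fi T _ M C HC0 HC)). }
    rewrite avg_abs_eq in H0. apply (Rmult_le_compat_l (INR M)) in H0; [|lra].
    unfold Rdiv in H0. rewrite Rmult_comm, Rmult_assoc, Rinv_l, Rmult_1_r in H0 by lra. auto.
  - rewrite <- sumR_const. apply sumR_le. intros h Hh. unfold ps, ph.
    replace (2 * PI * ((c k - IZR z) * INR h ^ k + poly_eval c' k (INR h)) - 2 * PI * (INR h ^ k * al + poly_eval c' k (INR h)))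
      with ((2 * PI) * ((c k - IZR z - al) * INR h ^ k)) by ring.
    rewrite (Rabs_mult (2 * PI)), (Rabs_mult (c k - IZR z - al)), (Rabs_right (2 * PI)) by (pose proof PI_RGT_0; lra).
    rewrite (Rabs_right (INR h ^ k)) by (apply Rle_ge, pow_le, pos_INR).
    assert (INR h ^ k <= INR M ^ k) by (apply pow_incr; split; [apply pos_INR| apply le_INR; lia]).
    pose proof PI_RGT_0. pose proof (Rabs_pos (c k - IZR z - al)).
    set (r := Rabs (c k - IZR z - al)) in *. assert (0 <= 2 * PI * r) by (apply Rmult_le_pos; lra).
    replace (2 * PI * (r * INR h ^ k) * C) with (2 * PI * r * INR h ^ k * C) by ring.
    apply Rmult_le_compat_r; auto. apply Rmult_le_compat_l; auto.
Qed.

Lemma main_est {X} (fr fi : X -> R) T x k c al z N M C : (M >= 1)%nat -> (N >= 1)%nat -> 0 <= C ->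
  (forall w, nrm (fr w) (fi w) <= C) ->
  avg_abs (fun n => poly_eval c (S k) (INR n)) fr fi T x N <=
  avg T x (gfun k al fr fi T M) N + 2 * PI * Rabs (c k - IZR z - al) * INR M ^ k * C + 2 * INR M * C / INR N.
Proof.
  intros HM HN HC0 HC.
  assert (HMp : INR M > 0) by (apply lt_0_INR; lia). assert (HNp : INR N > 0) by (apply lt_0_INR; lia).
  set (K := 2 * PI * Rabs (c k - IZR z - al) * INR M ^ k * C).
  pose proof (block_bound (fun n => poly_eval c (S k) (INR n)) fr fi T x N M C HM HC0 HC) as HB.
  assert (Hs : sumR (fun m => nrm (sumR (re_t (fun h => poly_eval c (S k) (INR (m + h)%nat)) fr fi T (iter_map m T x)) M)
                     (sumR (im_t (fun h => poly_eval c (S k) (INR (m + h)%nat)) fr fi T (iter_map m T x)) M)) N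
     <= sumR (fun m => INR M * gfun k al fr fi T M (iter_map m T x) + INR M * K) N).
  { apply sumR_le. intros m _. apply (block_term fr fi T k c al z (iter_map m T x) m M C HM HC0 HC). }
  rewrite sumR_plus, sumR_scal, sumR_const in Hs.
  rewrite avg_abs_eq. unfold avg.
  set (Sg := sumR (fun m => gfun k al fr fi T M (iter_map m T x)) N) in *.
  set (nr := nrm (sumR (re_t (fun n => poly_eval c (S k) (INR n)) fr fi T x) N)
       (sumR (im_t (fun n => poly_eval c (S k) (INR n)) fr fi T x) N)) in *.
  assert (H1 : INR M * nr <= INR M * (Sg + INR N * K + INR M * (2 * C))) by lra.
  apply Rmult_le_reg_l in H1; auto.
  apply (Rmult_le_reg_r (INR N)); auto. unfold Rdiv.
  replace ((Sg * / INR N + K + 2 * INR M * C * / INR N) * INR N) with (Sg + INR N * K + INR M * (2 * C)) by (field; lra).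
  rewrite Rmult_assoc, Rinv_l, Rmult_1_r by lra. auto.
Qed.
Open Scope R_scope.

Lemma cover01 (Q : R -> R -> Prop) : (forall al, 0 <= al <= 1 -> exists dl, dl > 0 /\ Q al dl) ->
  exists l : list (R * R), (forall p, In p l -> snd p > 0 /\ Q (fst p) (snd p)) /\
    forall g, 0 <= g <= 1 -> exists p, In p l /\ Rabs (g - fst p) < snd p.
Proof.
  intros H.
  set (A := fun s => 0 <= s <= 1 /\ exists l : list (R * R), (forall p, In p l -> snd p > 0 /\ Q (fst p) (snd p)) /\
    forall g, 0 <= g <= s -> exists p, In p l /\ Rabs (g - fst p) < snd p).
  assert (A0 : A 0).
  { destruct (H 0 ltac:(lra)) as [d0 [Hd0 HQ]]. split; [lra|]. exists ((0, d0) :: nil). split.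
    - intros p [<-|[]]; simpl; auto.
    - intros g Hg. exists (0, d0); split; [left; auto|]. simpl. replace g with 0 by lra. rewrite Rminus_0_r, Rabs_R0; auto. }
  destruct (completeness A) as [s [Hub Hlub]].
  { exists 1. intros r [Hr _]; lra. }
  { exists 0; auto. }
  assert (Hs0 : 0 <= s) by (apply Hub; auto).
  assert (Hs1 : s <= 1) by (apply Hlub; intros r [Hr _]; lra).
  destruct (H s ltac:(lra)) as [ds [Hds HQs]].
  assert (Hex : exists s1, A s1 /\ s1 > s - ds).
  { apply NNPP; intros Hn. assert (s <= s - ds); [|lra]. apply Hlub. intros r Hr. apply Rnot_lt_le; intros Hlt.
    apply Hn; exists r; split; auto. }
  destruct Hex as [s1 [[Hs1r [l [Hl Hcov]]] Hs1s]].
  set (l' := (s, ds) :: l).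
  assert (Hl' : forall p, In p l' -> snd p > 0 /\ Q (fst p) (snd p)).
  { intros p [<-|Hp]; simpl; auto. }
  assert (Hcov' : forall g, 0 <= g <= Rmin 1 (s + ds / 2) -> exists p, In p l' /\ Rabs (g - fst p) < snd p).
  { intros g Hg. destruct (Rle_dec g s1).
    - destruct (Hcov g ltac:(lra)) as [p [Hp1 Hp2]]. exists p; split; auto. right; auto.
    - exists (s, ds). split; [left; auto|]. simpl. pose proof (Rmin_r 1 (s + ds / 2)). apply Rabs_def1; lra. }
  assert (As' : A (Rmin 1 (s + ds / 2))).
  { split. split. apply Rmin_glb; lra. apply Rmin_l. exists l'; split; auto. }
  specialize (Hub _ As'). assert (Hmin : Rmin 1 (s + ds / 2) = 1).
  { unfold Rmin in *. destruct (Rle_dec 1 (s + ds / 2)); auto. lra. }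
  rewrite Hmin in Hcov'. exists l'; split; auto.
Qed.

Lemma list_max_N (l : list (R * R)) (P : R * R -> nat -> Prop) :
  (forall p, In p l -> exists N1, forall N, (N >= N1)%nat -> P p N) ->
  exists N0, forall p, In p l -> forall N, (N >= N0)%nat -> P p N.
Proof.
  induction l; intros H.
  - exists O. intros p [].
  - destruct IHl as [N0 HN0]. intros p Hp; apply H; right; auto.
    destruct (H a (or_introl eq_refl)) as [N1 HN1]. exists (Nat.max N0 N1).
    intros p [<-|Hp] N HN. apply HN1; lia. apply HN0; auto; lia.
Qed.
Open Scope R_scope.

Theorem proposition4p3 (X : Type) (d : X -> X -> R) (T : X -> X)
  (k : nat) (fr fi : X -> R) :
  tds d T ->
  (forall j : nat, (j >= 1)%nat -> uniquely_ergodic d (iter_map j T)) ->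
  (k >= 1)%nat ->
  continuous_fun d fr -> continuous_fun d fi ->
  (forall (alpha : R) (x : X) (eps : R), eps > 0 ->
     exists N0 : nat, forall N : nat, (N >= N0)%nat ->
       forall c : nat -> R,
         avg_abs (fun n => INR n ^ k * alpha + poly_eval c k (INR n))
                 fr fi T x N <= eps) ->
  forall (x : X) (eps : R), eps > 0 ->
    exists N0 : nat, forall N : nat, (N >= N0)%nat ->
      forall c : nat -> R,
        avg_abs (fun n => poly_eval c (S k) (INR n)) fr fi T x N <= eps.
Proof.
  intros [Hm [Hc HT]] Hue Hk Hfr Hfi Hhyp x eps Heps.
  destruct (Hue 1%nat (le_n 1)) as [[L HL1] Huniq1].
  assert (HL : invariant_state d T L) by exact HL1.
  assert (Huniq : forall L1 L2, invariant_state d T L1 -> invariant_state d T L2 -> forall f, continuous_fun d f -> L1 f = L2 f)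
    by (intros L1 L2 H1 H2 f Hf; exact (Huniq1 L1 L2 H1 H2 f Hf)).
  assert (HLp := inv_pos_state d T L HL).
  destruct (cont_bounded d fr Hm Hc Hfr) as [Br HBr].
  destruct (cont_bounded d fi Hm Hc Hfi) as [Bi HBi].
  set (C := Br + Bi + 1).
  assert (HC : forall w, nrm (fr w) (fi w) <= C).
  { intros w. eapply Rle_trans; [apply nrm_abs|]. specialize (HBr w); specialize (HBi w). unfold C; lra. }
  assert (HC0 : 0 < C) by (pose proof (HBr x); pose proof (HBi x); pose proof (Rabs_pos (fr x)); pose proof (Rabs_pos (fi x)); unfold C; lra).
  set (Q := fun al dl => exists N1, forall N, (N >= N1)%nat -> forall c z, Rabs (c k - IZR z - al) < dl ->
              avg_abs (fun n => poly_eval c (S k) (INR n)) fr fi T x N <= eps).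
  assert (HQ : forall al, 0 <= al <= 1 -> exists dl, dl > 0 /\ Q al dl).
  { intros al _.
    set (gs := fun M => gfun k al fr fi T (S M)).
    destruct (daniell d L gs C Hm Hc HLp) with (e := eps / 8) as [M HM].
    - intros M. apply gfun_cont with C; auto; lra.
    - intros M y. apply gfun_bounds; auto; lra.
    - intros y e He. destruct (Hhyp al y e He) as [N0 HN0]. exists N0. intros M HM.
      unfold gs, gfun. apply (supR_le _ C (fun _ => 0)).
      intros; apply (proj2 (avg_abs_bounds _ fr fi T _ _ C ltac:(lra) HC)).
      intros c. apply HN0. lia.
    - lra.
    - set (M' := S M). fold M' in HM. unfold gs in HM. fold M' in HM.
      assert (HMk : 0 <= INR M' ^ k) by (apply pow_le, pos_INR).
      set (dl := eps / (8 * PI * INR M' ^ k * C + 1)).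
      assert (Hden : 8 * PI * INR M' ^ k * C + 1 > 0).
      { pose proof PI_RGT_0. assert (0 <= 8 * PI * INR M' ^ k * C). { apply Rmult_le_pos; [|lra]. apply Rmult_le_pos; [|exact HMk]. lra. } lra. }
      assert (Hdl : dl > 0) by (unfold dl; apply Rdiv_lt_0_compat; lra).
      exists dl; split; auto.
      assert (HGc : continuous_fun d (gfun k al fr fi T M')) by (apply gfun_cont with C; auto; lra).
      destruct (generic d T L x _ Hm Hc HT HL Huniq HGc (eps / 8) ltac:(lra)) as [NB HNB].
      destruct (INR_unbounded (16 * INR M' * C / eps)) as [n1 Hn1].
      exists (Nat.max NB (Nat.max n1 1)). intros N HN c z Hz.
      assert (HN1 : (N >= 1)%nat) by lia.
      eapply Rle_trans; [apply (main_est fr fi T x k c al z N M' C); [unfold M'; lia|lia|lra|exact HC]|].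
      specialize (HNB N ltac:(lia)).
      assert (T1 : 2 * PI * Rabs (c k - IZR z - al) * INR M' ^ k * C <= eps / 4).
      { pose proof PI_RGT_0.
        apply Rle_trans with (2 * PI * dl * INR M' ^ k * C).
        { apply Rmult_le_compat_r; [lra|]. apply Rmult_le_compat_r; auto. apply Rmult_le_compat_l; lra. }
        unfold dl. apply (Rmult_le_reg_r (8 * PI * INR M' ^ k * C + 1)); auto.
        replace (2 * PI * (eps / (8 * PI * INR M' ^ k * C + 1)) * INR M' ^ k * C * (8 * PI * INR M' ^ k * C + 1))
          with (2 * PI * eps * INR M' ^ k * C) by (field; lra).
        assert (0 <= PI * INR M' ^ k * C) by (apply Rmult_le_pos; [apply Rmult_le_pos; [lra|exact HMk]|lra]). nra. }
      assert (T2 : 2 * INR M' * C / INR N <= eps / 8).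
      { assert (INR N >= INR n1) by (apply Rle_ge, le_INR; lia). assert (INR N > 0) by (apply lt_0_INR; lia).
        apply (Rmult_le_reg_r (INR N)); auto. unfold Rdiv. rewrite Rmult_assoc, Rinv_l, Rmult_1_r by lra.
        assert (16 * INR M' * C / eps < INR N) by lra.
        apply (Rmult_lt_compat_l eps) in H1; [|lra]. replace (eps * (16 * INR M' * C / eps)) with (16 * INR M' * C) in H1 by (field; lra).
        lra. }
      lra. }
  destruct (cover01 Q HQ) as [l [Hl Hcov]].
  destruct (list_max_N l (fun p N => forall c z, Rabs (c k - IZR z - fst p) < snd p ->
              avg_abs (fun n => poly_eval c (S k) (INR n)) fr fi T x N <= eps)) as [N0 HN0].
  { intros p Hp. destruct (Hl p Hp) as [_ [N1 HN1]]. exists N1. auto. }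
  exists N0. intros N HN c.
  destruct (archimed (c k)) as [Hu1 Hu2].
  set (z := (up (c k) - 1)%Z).
  assert (Hz : IZR z = IZR (up (c k)) - 1) by (unfold z; rewrite minus_IZR; auto).
  destruct (Hcov (c k - IZR z) ltac:(rewrite Hz; lra)) as [p [Hp Hp2]].
  apply (HN0 p Hp N HN c z). auto.
Qed.
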